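(* Consider the line network model (see context) with $\ell$ links and erasure probabilities $p_1,\dots,p_\ell$ having a unique worst link, i.e. there is $m$ with $p_m=\max_i p_i<1$ and $p_i<p_m$ for $i\ne m$. Let $A:=1-\max_{1\le i\le\ell}p_i$ and fix $\delta\in(0,1/2)$. Then for all sufficiently large $n$, $$\mathbb{P}\!\left[\,|T_n-\mathbb{E}T_n|>\frac{n^{1/2+\delta}}{A}\right]\le \frac{2A}{n}+\frac{2A\,n^{2\delta}}{n^2-n^{1+2\delta}}.$$ In particular (Theorem 2), with $\epsilon_n=n^{3/4}/A$, $\mathbb{P}[|T_n-\mathbb{E}T_n|>\epsilon_n]\le \frac{2A}{n}+o(1/n)$.
   Context: Line network model. Fix integers $\ell\ge1$, $n\ge1$ and erasure probabilities $p_1,\dots,p_\ell\in[0,1)$. Let $\{z_{t,i}: t\ge1,\,1\le i\le\ell\}$ be independent Bernoulli random variables with $\mathbb{P}(z_{t,i}=1)=1-p_i$ ($z_{t,i}=1$ means link $i$ is ON at time step $t$). Nodes $N^{(1)},\dots,N^{(\ell+1)}$, link $i$ from $N^{(i)}$ to $N^{(i+1)}$; the source holds $n$ packets and each node sends random linear combinations of its received packets (idealized so a transmission is innovative whenever possible). The rank $\rho_i(t)$ of node $N^{(i)}$ after $t$ steps satisfies $\rho_1(t)=n$, $\rho_i(0)=0$ for $i\ge2$, and $\rho_{i+1}(t)=\rho_{i+1}(t-1)+z_{t,i}\mathbf 1\{\rho_i(t-1)>\rho_{i+1}(t-1)\}$ for $t\ge1$, $1\le i\le \ell$. The completion time is $T_n:=\min\{t\ge0:\rho_{\ell+1}(t)=n\}$.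 *)

(* Defs.v *)
From Stdlib Require Import Reals List Arith Bool.
Open Scope R_scope.

(* A realization of the link states: z s i = true iff link i is ON at time s. *)
Definition config := nat -> nat -> bool.

(* rank_ n z t j = rho_j(t), the rank of node N^(j) after t steps (j = 1..l+1). *)
Fixpoint rank_ (n : nat) (z : config) (t : nat) (j : nat) : nat :=
  match t with
  | O => if Nat.eqb j 1 then n else 0%nat
  | S t' =>
      if Nat.eqb j 1 then n
      else if Nat.leb 2 j then
        (rank_ n z t' j +
         (if z t (j - 1) && Nat.ltb (rank_ n z t' j) (rank_ n z t' (j - 1)) then 1 else 0))%nat
      else 0%nat
  end.

(* T_n = t : node l+1 has full rank n at time t and not before. *)
Definition completes_at (l n : nat) (z : config) (t : nat) : bool :=
  Nat.eqb (rank_ n z t (S l)) n &&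
  forallb (fun s => negb (Nat.eqb (rank_ n z s (S l)) n)) (seq 0 t).

Definition upd (z : config) (s i : nat) (b : bool) : config :=
  fun s' i' => if Nat.eqb s' s && Nat.eqb i' i then b else z s' i'.

(* Expectation of F under the product of independent Bernoulli variables
   z_{s,i}, P(z_{s,i}=1) = 1 - p i, for the coordinates (s,i) listed in ps
   (F must only depend on those coordinates). *)
Fixpoint Esum (p : nat -> R) (ps : list (nat * nat)) (F : config -> R) (z : config) : R :=
  match ps with
  | nil => F z
  | (s, i) :: ps' =>
      (1 - p i) * Esum p ps' F (upd z s i true) + p i * Esum p ps' F (upd z s i false)
  end.

Definition coords (t l : nat) : list (nat * nat) :=
  flat_map (fun s => map (fun i => (s, i)) (seq 1 l)) (seq 1 t).

Definition zfalse : config := fun _ _ => false.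

Definition probT (l : nat) (p : nat -> R) (n t : nat) : R :=
  Esum p (coords t l) (fun z => if completes_at l n z t then 1 else 0) zfalse.

Definition maxp (l : nat) (p : nat -> R) : R :=
  fold_right (fun i acc => Rmax (p i) acc) (p 1%nat) (seq 1 l).

(* Main.v *)
Require Import Defs.
From Stdlib Require Import Reals List Arith Bool Lra Lia Psatz ZArith.
Open Scope R_scope.

Definition dep (C : nat -> nat -> Prop) (F : config -> R) :=
  forall z z', (forall s i, C s i -> z s i = z' s i) -> F z = F z'.

Lemma upd_same z s i b : upd z s i b s i = b.
Proof. unfold upd. rewrite !Nat.eqb_refl. reflexivity. Qed.

Lemma upd_other z s i b s' i' : (s',i') <> (s,i) -> upd z s i b s' i' = z s' i'.
Proof.
  intros H. unfold upd. destruct (Nat.eqb_spec s' s); destruct (Nat.eqb_spec i' i); subst; simpl; auto.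
  congruence.
Qed.

Lemma Esum_ext p ps F G z : (forall z, F z = G z) -> Esum p ps F z = Esum p ps G z.
Proof.
  revert z. induction ps as [|[s i] ps IH]; intros z H; simpl; auto.
  rewrite !IH; auto.
Qed.

Lemma Esum_dep p C ps F : dep C F -> dep C (Esum p ps F).
Proof.
  intros HF. induction ps as [|[s i] ps IH]; simpl; auto.
  intros z z' H. rewrite (IH (upd z s i true) (upd z' s i true)).
  rewrite (IH (upd z s i false) (upd z' s i false)). reflexivity.
  all: intros s' i' Hc; unfold upd; destruct (Nat.eqb s' s && Nat.eqb i' i); auto.
Qed.

Lemma Esum_nodep p C ps F z : dep C F -> (forall s i, In (s,i) ps -> ~ C s i) -> Esum p ps F z = F z.
Proof.
  intros HF. revert z. induction ps as [|[s i] ps IH]; intros z Hn; simpl; auto.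
  rewrite !IH by (intros; apply Hn; simpl; auto).
  assert (E : forall b, F (upd z s i b) = F z).
  { intro b. apply HF. intros s' i' Hc. apply upd_other. intro E; inversion E; subst.
    apply (Hn s i); simpl; auto. }
  rewrite !E. ring.
Qed.

Lemma Esum_plus p ps F G z : Esum p ps (fun z => F z + G z) z = Esum p ps F z + Esum p ps G z.
Proof. revert z. induction ps as [|[s i] ps IH]; intros z; simpl; auto. rewrite !IH. ring. Qed.

Lemma Esum_scal p ps c F z : Esum p ps (fun z => c * F z) z = c * Esum p ps F z.
Proof. revert z. induction ps as [|[s i] ps IH]; intros z; simpl; auto. rewrite !IH. ring. Qed.

Lemma Esum_const p ps c z : Esum p ps (fun _ => c) z = c.
Proof. revert z. induction ps as [|[s i] ps IH]; intros z; simpl; auto. rewrite !IH. ring. Qed.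

Lemma Esum_le p ps F G z : (forall s i, In (s,i) ps -> 0 <= p i <= 1) ->
  (forall z, F z <= G z) -> Esum p ps F z <= Esum p ps G z.
Proof.
  revert z. induction ps as [|[s i] ps IH]; intros z Hp H; simpl; auto.
  assert (Hpi := Hp s i (or_introl eq_refl)).
  assert (IH' : forall z, Esum p ps F z <= Esum p ps G z) by (intros; apply IH; auto; intros; apply (Hp s0); simpl; auto).
  pose proof (IH' (upd z s i true)). pose proof (IH' (upd z s i false)).
  apply Rplus_le_compat; apply Rmult_le_compat_l; lra.
Qed.

Lemma Esum_app p ps qs F z : Esum p (ps ++ qs) F z = Esum p ps (fun z' => Esum p qs F z') z.
Proof. revert z. induction ps as [|[s i] ps IH]; intros z; simpl; auto. rewrite !IH. auto. Qed.

Lemma Esum_mul p C D ps F G z : dep C F -> dep D G ->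
  (forall s i, In (s,i) ps -> ~ C s i \/ ~ D s i) ->
  Esum p ps (fun z => F z * G z) z = Esum p ps F z * Esum p ps G z.
Proof.
  intros HF HG. revert z. induction ps as [|[s i] ps IH]; intros z Hn; simpl; auto.
  rewrite !IH by (intros; apply Hn; simpl; auto).
  destruct (Hn s i (or_introl eq_refl)) as [Hc|Hc].
  - assert (E : forall b, Esum p ps F (upd z s i b) = Esum p ps F z).
    { intro b. apply (Esum_dep p C). exact HF. intros s' i' Hc'. apply upd_other. intro E; inversion E; subst; auto. }
    rewrite !E. ring.
  - assert (E : forall b, Esum p ps G (upd z s i b) = Esum p ps G z).
    { intro b. apply (Esum_dep p D). exact HG. intros s' i' Hc'. apply upd_other. intro E; inversion E; subst; auto. }
    rewrite !E. ring.
Qed.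

Lemma Esum_single p ps s i g z : In (s,i) ps ->
  Esum p ps (fun z => g (z s i)) z = (1 - p i) * g true + p i * g false.
Proof.
  revert z. induction ps as [|[s' i'] ps IH]; intros z Hin; simpl in *. contradiction.
  destruct (in_dec (ltac:(repeat decide equality) : forall x y : nat*nat, {x=y}+{x<>y}) (s,i) ps) as [Hi|Hi].
  - rewrite !IH by auto. destruct Hin as [E|E]; [inversion E; subst|]; ring.
  - destruct Hin as [E|E]; [|contradiction]. inversion E; subst.
    rewrite !(Esum_nodep p (fun a b => a = s /\ b = i)).
    + rewrite !upd_same. reflexivity.
    + intros z1 z2 H. rewrite H; auto.
    + intros a b H [-> ->]. contradiction.
    + intros z1 z2 H. rewrite H; auto.
    + intros a b H [-> ->]. contradiction.
Qed.

Fixpoint cnt (z : config) (i a t : nat) : nat :=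
  match t with
  | O => O
  | S t' => (cnt z i a t' + (if Nat.leb a (S t') && z (S t') i then 1 else 0))%nat
  end.

Section Rank.
Variable n : nat.
Variable z : config.
Notation rk := (rank_ n z).

Lemma rank_1 t : rk t 1 = n.
Proof. destruct t; reflexivity. Qed.

Lemma rank_O0 j : (2 <= j)%nat -> rk 0 j = 0%nat.
Proof. intros H. simpl. destruct (Nat.eqb_spec j 1); [lia|auto]. Qed.

Lemma rank_S t i : (1 <= i)%nat ->
  rk (S t) (S i) = (rk t (S i) + (if z (S t) i && Nat.ltb (rk t (S i)) (rk t i) then 1 else 0))%nat.
Proof.
  intros H. destruct i; [lia|]. reflexivity.
Qed.

Lemma rank_mono t j : (rk t j <= rk (S t) j)%nat.
Proof.
  destruct j as [|[|i]].
  - simpl. destruct t; simpl; lia.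
  - rewrite !rank_1; lia.
  - rewrite rank_S by lia. lia.
Qed.

Lemma rank_mono' t t' j : (t <= t')%nat -> (rk t j <= rk t' j)%nat.
Proof. induction 1; auto. pose proof (rank_mono m j); lia. Qed.

Lemma rank_le_prev t i : (1 <= i)%nat -> (rk t (S i) <= rk t i)%nat.
Proof.
  intros Hi. induction t.
  - rewrite (rank_O0 (S i)) by lia. lia.
  - rewrite rank_S by auto. pose proof (rank_mono t i).
    destruct (z (S t) i); rewrite ?andb_true_l, ?andb_false_l; [|lia].
    destruct (Nat.ltb_spec (rk t (S i)) (rk t i)); lia.
Qed.

Lemma rank_le_n t j : (rk t j <= n)%nat.
Proof.
  induction j as [|[|i] IH].
  - destruct t; simpl; lia.
  - rewrite rank_1; lia.
  - pose proof (rank_le_prev t (S i)); lia.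
Qed.

Lemma rank_le_chain t m l : (1 <= m <= l)%nat -> (rk t (S l) <= rk t (S m))%nat.
Proof.
  intros [H1 H2]. induction H2; auto. pose proof (rank_le_prev t (S m0)); lia.
Qed.

Lemma cnt_zero i a t : (t < a)%nat -> cnt z i a t = 0%nat.
Proof.
  induction t; simpl; auto. intros H. rewrite IHt by lia.
  destruct (Nat.leb_spec a (S t)); [lia|]. reflexivity.
Qed.

Lemma rank_le_cnt t i : (1 <= i)%nat -> (rk t (S i) <= cnt z i 1 t)%nat.
Proof.
  intros Hi. induction t.
  - rewrite (rank_O0 (S i)) by lia. simpl; lia.
  - rewrite rank_S by auto. simpl cnt. destruct (z (S t) i); simpl; [|lia].
    destruct (Nat.ltb (rk t (S i)) (rk t i)); lia.
Qed.

Lemma rank_decomp t i : (1 <= i)%nat ->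
  rk t (S i) = cnt z i 1 t \/ exists u, (u <= t)%nat /\ rk t (S i) = (rk u i + cnt z i (u+2) t)%nat.
Proof.
  intros Hi. induction t.
  - left. rewrite (rank_O0 (S i)) by lia. reflexivity.
  - rewrite rank_S by auto. pose proof (rank_le_prev t i Hi).
    destruct (Nat.ltb_spec (rk t (S i)) (rk t i)).
    + rewrite andb_true_r. destruct IHt as [E|[u [Hu E]]].
      * left. cbn [cnt]. rewrite E. reflexivity.
      * assert (u < t)%nat.
        { destruct (Nat.eq_dec u t); [subst; lia|lia]. }
        right. exists u. split; [lia|]. cbn [cnt]. rewrite E.
        replace (Nat.leb (u+2) (S t)) with true by (symmetry; apply Nat.leb_le; lia).
        rewrite andb_true_l. lia.
    + right. exists t. split; [lia|]. rewrite andb_false_r. rewrite cnt_zero by lia. lia.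
Qed.

Lemma forall_seq_eq t l :
  forallb (fun s => negb (Nat.eqb (rk s (S l)) n)) (seq 0 (S t)) = negb (Nat.eqb (rk t (S l)) n).
Proof.
  induction t.
  - simpl. rewrite andb_true_r. reflexivity.
  - rewrite seq_S, forallb_app, IHt. cbn [forallb]. rewrite andb_true_r. rewrite Nat.add_0_l.
    pose proof (rank_mono t (S l)). pose proof (rank_le_n (S t) (S l)).
    destruct (Nat.eqb_spec (rk t (S l)) n); destruct (Nat.eqb_spec (rk (S t) (S l)) n); cbn [negb andb]; auto; lia.
Qed.

End Rank.

Lemma completes_at_eq l n z t : completes_at l n z t =
  Nat.eqb (rank_ n z t (S l)) n && match t with O => true | S t' => negb (Nat.eqb (rank_ n z t' (S l)) n) end.
Proof.
  unfold completes_at. destruct t; auto. rewrite forall_seq_eq. reflexivity.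
Qed.

Lemma rank_dep n t : forall j z z', (forall s i, (1 <= s <= t)%nat -> (1 <= i)%nat -> (i < j)%nat -> z s i = z' s i) ->
  rank_ n z t j = rank_ n z' t j.
Proof.
  induction t; intros j z z' H.
  - reflexivity.
  - destruct j as [|[|i]].
    + reflexivity.
    + rewrite !rank_1; auto.
    + rewrite !rank_S by lia.
      rewrite (IHt (S (S i)) z z'), (IHt (S i) z z') by (intros; apply H; lia).
      rewrite (H (S t) (S i)) by lia. reflexivity.
Qed.

Lemma cnt_dep i a t z z' : (forall s, (1 <= s <= t)%nat -> z s i = z' s i) -> cnt z i a t = cnt z' i a t.
Proof.
  induction t; simpl; intros H; auto. rewrite IHt by (intros; apply H; lia). rewrite H by lia. reflexivity.
Qed.

Definition indb (b : bool) : R := if b then 1 else 0.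

Lemma in_coords s i T l : In (s,i) (coords T l) <-> (1 <= s <= T /\ 1 <= i <= l)%nat.
Proof.
  unfold coords. rewrite in_flat_map. split.
  - intros [x [Hx Hy]]. apply in_seq in Hx. apply in_map_iff in Hy. destruct Hy as [y [E Hy]].
    inversion E; subst. apply in_seq in Hy. lia.
  - intros H. exists s. split. apply in_seq; lia. apply in_map_iff. exists i. split; auto. apply in_seq; lia.
Qed.

Lemma coords_split t T l : (t <= T)%nat -> exists rest, coords T l = coords t l ++ rest /\
  forall s i, In (s,i) rest -> (t < s)%nat.
Proof.
  intros H. unfold coords. replace T with (t + (T - t))%nat by lia.
  rewrite seq_app, flat_map_app. eexists. split. reflexivity.
  intros s i Hin. apply in_flat_map in Hin. destruct Hin as [x [Hx Hy]]. apply in_seq in Hx.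
  apply in_map_iff in Hy. destruct Hy as [y [E _]]. inversion E; subst. lia.
Qed.

Section Prob.
Variable l : nat.
Variable p : nat -> R.
Hypothesis hp : forall i, (1 <= i <= l)%nat -> 0 <= p i < 1.

Definition PE (T : nat) (F : config -> R) : R := Esum p (coords T l) F zfalse.

Lemma PE_extend t T F : dep (fun s i => (s <= t)%nat) F -> (t <= T)%nat -> PE T F = PE t F.
Proof.
  intros HF H. destruct (coords_split t T l H) as [rest [E Hr]]. unfold PE. rewrite E, Esum_app.
  apply Esum_ext. intros z. apply (Esum_nodep p (fun s i => (s <= t)%nat)); auto.
  intros s i Hi. specialize (Hr s i Hi). lia.
Qed.

Lemma PE_le T F G : (forall z, F z <= G z) -> PE T F <= PE T G.
Proof.
  intros H. unfold PE. apply Esum_le; auto. intros s i Hi. apply in_coords in Hi.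
  specialize (hp i ltac:(lia)). lra.
Qed.

Lemma PE_plus T F G : PE T (fun z => F z + G z) = PE T F + PE T G.
Proof. apply Esum_plus. Qed.
Lemma PE_scal T c F : PE T (fun z => c * F z) = c * PE T F.
Proof. apply Esum_scal. Qed.
Lemma PE_const T c : PE T (fun _ => c) = c.
Proof. apply Esum_const. Qed.
Lemma PE_ext T F G : (forall z, F z = G z) -> PE T F = PE T G.
Proof. apply Esum_ext. Qed.

Lemma PE_sum T (f : nat -> config -> R) M :
  PE T (fun z => sum_f_R0 (fun t => f t z) M) = sum_f_R0 (fun t => PE T (f t)) M.
Proof.
  induction M; simpl; auto. rewrite PE_plus, IHM. reflexivity.
Qed.

Variable n : nat.

Definition G (k : nat) : R := PE k (fun z => indb (Nat.eqb (rank_ n z k (S l)) n)).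

Lemma dep_rank_ind k k' : (k <= k')%nat -> dep (fun s i => (s <= k')%nat) (fun z => indb (Nat.eqb (rank_ n z k (S l)) n)).
Proof.
  intros Hk z z' H. rewrite (rank_dep n k (S l) z z'); auto. intros; apply H; lia.
Qed.

Lemma probT_eq t : probT l p n t = PE t (fun z => indb (completes_at l n z t)).
Proof. reflexivity. Qed.

Lemma compl_sum z M : sum_f_R0 (fun t => indb (completes_at l n z t)) M = indb (Nat.eqb (rank_ n z M (S l)) n).
Proof.
  induction M.
  - cbn [sum_f_R0]. rewrite completes_at_eq. rewrite andb_true_r. reflexivity.
  - cbn [sum_f_R0]. rewrite IHM. rewrite completes_at_eq.
    pose proof (rank_mono n z M (S l)). pose proof (rank_le_n n z (S M) (S l)).
    unfold indb. destruct (Nat.eqb_spec (rank_ n z M (S l)) n); destruct (Nat.eqb_spec (rank_ n z (S M) (S l)) n);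
      cbn [negb andb]; try lra; lia.
Qed.

Lemma sum_probT M : sum_f_R0 (probT l p n) M = G M.
Proof.
  unfold G. rewrite <- (PE_ext M (fun z => sum_f_R0 (fun t => indb (completes_at l n z t)) M)) by (intros; apply compl_sum).
  rewrite PE_sum. apply sum_eq. intros t Ht. rewrite probT_eq. symmetry. apply PE_extend; auto.
  intros z z' H. rewrite !completes_at_eq.
  destruct t as [|t'].
  - rewrite (rank_dep n 0 (S l) z z'); auto. intros; apply H; lia.
  - rewrite (rank_dep n (S t') (S l) z z'), (rank_dep n t' (S l) z z'); auto; intros; apply H; lia.
Qed.

Lemma probT_0 : probT l p n 0 = G 0.
Proof. rewrite <- sum_probT. reflexivity. Qed.
Lemma probT_S t : probT l p n (S t) = G (S t) - G t.
Proof. rewrite <- !sum_probT. simpl. ring. Qed.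

Lemma G_mono k : G k <= G (S k).
Proof.
  unfold G. rewrite <- (PE_extend k (S k)); [|apply dep_rank_ind; lia|lia].
  apply PE_le. intros z. pose proof (rank_mono n z k (S l)). pose proof (rank_le_n n z (S k) (S l)).
  unfold indb. destruct (Nat.eqb_spec (rank_ n z k (S l)) n); destruct (Nat.eqb_spec (rank_ n z (S k) (S l)) n); try lra; lia.
Qed.

Lemma G_mono' k k' : (k <= k')%nat -> G k <= G k'.
Proof. induction 1. lra. pose proof (G_mono m); lra. Qed.

Lemma G_range k : 0 <= G k <= 1.
Proof.
  unfold G. split.
  - rewrite <- (PE_const k 0). apply PE_le. intros; unfold indb; destruct (_ =? _); lra.
  - rewrite <- (PE_const k 1). apply PE_le. intros; unfold indb; destruct (_ =? _); lra.
Qed.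

Lemma probT_nonneg t : 0 <= probT l p n t.
Proof. destruct t. rewrite probT_0. apply G_range. rewrite probT_S. pose proof (G_mono t). lra. Qed.

Lemma Q_eq k : 1 - G k = PE k (fun z => indb (Nat.ltb (rank_ n z k (S l)) n)).
Proof.
  unfold G. rewrite <- (PE_const k 1) at 1.
  match goal with |- ?a - ?b = _ => replace (a - b) with (a + (-1) * b) by ring end.
  rewrite <- (PE_scal k (-1)), <- PE_plus.
  apply PE_ext. intros z. pose proof (rank_le_n n z k (S l)). unfold indb.
  destruct (Nat.eqb_spec (rank_ n z k (S l)) n); destruct (Nat.ltb_spec (rank_ n z k (S l)) n); try lra; lia.
Qed.

End Prob.

Lemma pow_le1 r n : 0 <= r <= 1 -> r ^ n <= 1.
Proof. intros H. rewrite <- (pow1 n). apply pow_incr. lra. Qed.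

Lemma pow_le1_mono r a b : 0 <= r <= 1 -> (b <= a)%nat -> r ^ a <= r ^ b.
Proof.
  intros Hr H. replace a with (b + (a - b))%nat by lia. rewrite pow_add.
  pose proof (pow_le r b (proj1 Hr)). assert (r ^ (a - b) <= 1) by (apply pow_le1; lra).
  assert (0 <= r ^ (a-b)) by (apply pow_le; lra). nra.
Qed.

Lemma sum_term_le (f : nat -> R) u t : (forall k, 0 <= f k) -> (u <= t)%nat -> f u <= sum_f_R0 f t.
Proof.
  intros Hf H. induction t.
  - replace u with 0%nat by lia. simpl. lra.
  - simpl. destruct (Nat.eq_dec u (S t)). subst. pose proof (cond_pos_sum f t Hf). lra.
    specialize (IHt ltac:(lia)). specialize (Hf (S t)). lra.
Qed.

Fixpoint W (lam : R) (z : config) (i t : nat) : R :=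
  match i with
  | O => 0
  | S i' => exp (- lam * INR (cnt z i 1 t)) +
            sum_f_R0 (fun u => W lam z i' u * exp (- lam * INR (cnt z i (u+2) t))) t
  end.

Lemma W_nonneg lam z i t : 0 <= W lam z i t.
Proof.
  revert t. induction i; intros t; simpl. lra.
  pose proof (exp_pos (- lam * INR (cnt z (S i) 1 t))).
  assert (0 <= sum_f_R0 (fun u => W lam z i u * exp (- lam * INR (cnt z (S i) (u+2) t))) t).
  { apply cond_pos_sum. intros k. pose proof (IHi k). pose proof (exp_pos (- lam * INR (cnt z (S i) (k + 2) t))). nra. }
  lra.
Qed.

Lemma W_dep lam i t : dep (fun s k => (k <= i)%nat) (fun z => W lam z i t).
Proof.
  revert t. induction i; intros t z z' H; simpl; auto.
  rewrite (cnt_dep (S i) 1 t z z') by (intros; apply H; lia).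
  f_equal. apply sum_eq. intros u _. rewrite (IHi u z z') by (intros; apply H; lia).
  rewrite (cnt_dep (S i) (u+2) t z z') by (intros; apply H; lia). reflexivity.
Qed.

Lemma W_key n z lam : 0 <= lam -> forall i t, (rank_ n z t (S i) < n)%nat ->
  exp (- lam * INR (rank_ n z t (S i))) <= W lam z i t.
Proof.
  intros Hl i. induction i; intros t H.
  - rewrite rank_1 in H. lia.
  - destruct (rank_decomp n z t (S i) ltac:(lia)) as [E|[u [Hu E]]].
    + simpl W. rewrite E. pose proof (W_nonneg lam z (S (S i)) t). simpl in H0.
      assert (0 <= sum_f_R0 (fun u => W lam z i u * exp (- lam * INR (cnt z (S i) (u+2) t))) t).
      { apply cond_pos_sum. intros k. pose proof (W_nonneg lam z i k). pose proof (exp_pos (- lam * INR (cnt z (S i) (k + 2) t))). nra. }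
      lra.
    + simpl W. rewrite E. rewrite plus_INR, Rmult_plus_distr_l, exp_plus.
      assert (Hlt : (rank_ n z u (S i) < n)%nat) by lia.
      specialize (IHi u Hlt).
      pose proof (exp_pos (- lam * INR (cnt z (S i) (u + 2) t))).
      assert (exp (- lam * INR (rank_ n z u (S i))) * exp (- lam * INR (cnt z (S i) (u + 2) t)) <=
              W lam z i u * exp (- lam * INR (cnt z (S i) (u+2) t))) by (apply Rmult_le_compat_r; lra).
      pose proof (sum_term_le (fun u => W lam z i u * exp (- lam * INR (cnt z (S i) (u+2) t))) u t).
      simpl in H2. assert (0 <= exp (- lam * INR (cnt z (S i) 1 t))) by (apply Rlt_le, exp_pos).
      assert (forall k, 0 <= W lam z i k * exp (- lam * INR (cnt z (S i) (k + 2) t))).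
      { intros k. pose proof (W_nonneg lam z i k). pose proof (exp_pos (- lam * INR (cnt z (S i) (k + 2) t))). nra. }
      specialize (H2 H4 Hu). lra.
Qed.

Section MGF.
Variable l : nat.
Variable p : nat -> R.
Hypothesis hp : forall i, (1 <= i <= l)%nat -> 0 <= p i < 1.

Lemma cnt_mgf c w k a t T : (1 <= k <= l)%nat -> (1 <= a)%nat -> (t <= T)%nat -> 0 <= w ->
  (1 - p k) * exp c + p k <= w ->
  PE l p T (fun z => exp (c * INR (cnt z k a t))) <= w ^ (S t - a).
Proof.
  intros Hk Ha Ht Hw Hc. induction t.
  - cbn [cnt INR]. rewrite Rmult_0_r, exp_0, PE_const. replace (1 - a)%nat with 0%nat by lia. simpl; lra.
  - cbn [cnt]. destruct (Nat.leb_spec a (S t)).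
    + cbn [andb].
      rewrite (PE_ext l p T _ (fun z => exp (c * INR (cnt z k a t)) * exp (c * INR (if z (S t) k then 1%nat else 0%nat)))).
      2:{ intros z. rewrite plus_INR, Rmult_plus_distr_l, exp_plus. reflexivity. }
      unfold PE. rewrite (Esum_mul p (fun s i => (s <= t)%nat) (fun s i => s = S t)).
      * fold (PE l p T (fun z => exp (c * INR (cnt z k a t)))).
        rewrite (Esum_single p _ (S t) k (fun b => exp (c * INR (if b then 1%nat else 0%nat)))).
        2:{ apply in_coords. lia. }
        simpl INR. rewrite Rmult_0_r, exp_0, Rmult_1_r.
        replace (S (S t) - a)%nat with (S (S t - a)) by lia. rewrite <- tech_pow_Rmult.
        assert (0 <= PE l p T (fun z => exp (c * INR (cnt z k a t)))).
        { rewrite <- (PE_const l p T 0). apply PE_le; auto. intros; apply Rlt_le, exp_pos. }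
        specialize (IHt ltac:(lia)). pose proof (pow_le w (S t - a) Hw). rewrite Rmult_1_r. nra.
      * intros z z' Hzz. rewrite (cnt_dep k a t z z'); auto. intros; apply Hzz; lia.
      * intros z z' Hzz. rewrite Hzz; auto.
      * intros s i _. lia.
    + cbn [andb]. rewrite (PE_ext l p T _ (fun z => exp (c * INR (cnt z k a t)))) by (intros; rewrite Nat.add_0_r; reflexivity). replace (S (S t) - a)%nat with 0%nat by lia.
      specialize (IHt ltac:(lia)). replace (S t - a)%nat with 0%nat in IHt by lia. exact IHt.
Qed.

Fixpoint bnd (r : R) (i t : nat) : R :=
  match i with O => 0 | S i' => INR (t+2) ^ i' * r ^ t / r ^ i' end.

Lemma W_bound lam r : 0 <= lam -> 0 < r <= 1 ->
  (forall k, (1 <= k <= l)%nat -> (1 - p k) * exp (- lam) + p k <= r) ->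
  forall i, (i <= l)%nat -> forall t T, (t <= T)%nat -> PE l p T (fun z => W lam z i t) <= bnd r i t.
Proof.
  intros Hl Hr Hk i. induction i; intros Hi t T Ht.
  - simpl. rewrite PE_const. lra.
  - simpl W. rewrite PE_plus, PE_sum.
    assert (H1 : PE l p T (fun z => exp (- lam * INR (cnt z (S i) 1 t))) <= r ^ t).
    { pose proof (cnt_mgf (- lam) r (S i) 1 t T ltac:(lia) ltac:(lia) Ht ltac:(lra) (Hk (S i) ltac:(lia))) as X. replace (S t - 1)%nat with t in X by lia. exact X. }
    assert (H2 : forall u, (u <= t)%nat -> PE l p T (fun z => W lam z i u * exp (- lam * INR (cnt z (S i) (u+2) t)))
                   <= bnd r i u * r ^ (S t - (u+2))).
    { intros u Hu. unfold PE. rewrite (Esum_mul p (fun s k => (k <= i)%nat) (fun s k => k = S i)).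
      - fold (PE l p T (fun z => W lam z i u)). fold (PE l p T (fun z => exp (- lam * INR (cnt z (S i) (u+2) t)))).
        assert (A1 := IHi ltac:(lia) u T ltac:(lia)).
        assert (A2 : PE l p T (fun z => exp (- lam * INR (cnt z (S i) (u+2) t))) <= r ^ (S t - (u+2))) by (apply (cnt_mgf (- lam) r (S i) (u+2) t T ltac:(lia) ltac:(lia) Ht ltac:(lra) (Hk (S i) ltac:(lia)))).
        assert (0 <= PE l p T (fun z => W lam z i u)).
        { rewrite <- (PE_const l p T 0). apply PE_le; auto. intros; apply W_nonneg. }
        assert (0 <= PE l p T (fun z => exp (- lam * INR (cnt z (S i) (u+2) t)))).
        { rewrite <- (PE_const l p T 0). apply PE_le; auto. intros; apply Rlt_le, exp_pos. }
        apply Rmult_le_compat; auto.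
      - apply W_dep.
      - intros z z' H. rewrite (cnt_dep (S i) (u+2) t z z'); auto.
      - intros s k _. lia. }
    destruct i as [|i'].
    + simpl bnd in *. assert (sum_f_R0 (fun u => PE l p T (fun z => W lam z 0 u * exp (- lam * INR (cnt z 1 (u+2) t)))) t <= 0).
      { rewrite <- (Rmult_0_l (INR (S t))), <- sum_cte. apply sum_Rle. intros u Hu. specialize (H2 u Hu). lra. }
      simpl. simpl in H. lra.
    + assert (H3 : forall u, (u <= t)%nat -> bnd r (S i') u * r ^ (S t - (u+2)) <= INR (t+2) ^ i' * r ^ t / r ^ (S i')).
      { intros u Hu. simpl bnd. simpl pow at 3.
        assert (E1 : r ^ u * r ^ (S t - (u+2)) * r <= r ^ t).
        { replace (r ^ u * r ^ (S t - (u+2)) * r) with (r ^ (u + (S t - (u+2)) + 1)) by (rewrite !pow_add; ring). apply pow_le1_mono; [lra|lia]. }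
        assert (E2 : INR (u+2) ^ i' <= INR (t+2) ^ i').
        { apply pow_incr. split. apply pos_INR. apply le_INR. lia. }
        assert (0 < r ^ i') by (apply pow_lt; lra).
        assert (0 <= INR (u+2) ^ i') by (apply pow_le, pos_INR).
        assert (0 <= r ^ u) by (apply pow_le; lra).
        assert (0 <= r ^ (S t - (u+2))) by (apply pow_le; lra).
        unfold Rdiv. rewrite <- (tech_pow_Rmult r i'), Rinv_mult.
        replace (INR (u + 2) ^ i' * r ^ u * / r ^ i' * r ^ (S t - (u + 2)))
          with (INR (u + 2) ^ i' * / r ^ i' * (r ^ u * r ^ (S t - (u + 2)))) by ring.
        replace (INR (t + 2) ^ i' * r ^ t * (/ r * / r ^ i')) with (INR (t + 2) ^ i' * / r ^ i' * (r ^ t * / r)) by ring.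
        apply Rmult_le_compat.
        - apply Rmult_le_pos; auto. apply Rlt_le, Rinv_0_lt_compat; auto.
        - apply Rmult_le_pos; auto.
        - apply Rmult_le_compat_r; auto. apply Rlt_le, Rinv_0_lt_compat; auto.
        - apply (Rmult_le_reg_r r); [lra|]. replace (r ^ t * / r * r) with (r ^ t) by (field; lra). lra. }
      assert (H4 : sum_f_R0 (fun u => PE l p T (fun z => W lam z (S i') u * exp (- lam * INR (cnt z (S (S i')) (u+2) t)))) t
                   <= INR (t+2) ^ i' * r ^ t / r ^ (S i') * INR (S t)).
      { rewrite <- sum_cte. apply sum_Rle. intros u Hu. specialize (H2 u Hu). specialize (H3 u Hu). lra. }
      simpl bnd. set (X := r ^ t / r ^ S i').
      assert (HX : r ^ t <= X).
      { unfold X. assert (0 < r ^ S i' <= 1) by (split; [apply pow_lt; lra| apply pow_le1; lra]).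
        assert (0 <= r ^ t) by (apply pow_le; lra).
        apply (Rmult_le_reg_r (r ^ S i')); [lra|]. unfold Rdiv. rewrite Rmult_assoc, Rinv_l by lra. nra. }
      assert (HT : 1 <= INR (t+2) ^ i').
      { apply pow_R1_Rle. rewrite plus_INR. simpl. pose proof (pos_INR t). lra. }
      assert (0 <= X) by (pose proof (pow_le r t ltac:(lra)); lra).
      replace (INR (t+2) ^ i' * r ^ t / r ^ (S i')) with (INR (t+2) ^ i' * X) in H4 by (unfold X, Rdiv; ring).
      simpl pow. replace (INR (t + 2) * INR (t + 2) ^ i' * r ^ t / (r * r ^ i')) with (INR (t+2) * INR (t+2) ^ i' * X)
        by (unfold X; simpl; unfold Rdiv; ring).
      replace (INR (S t)) with (INR t + 1) in H4 by (rewrite S_INR; ring).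
      replace (INR (t+2)) with (INR t + 2) in * by (rewrite plus_INR; simpl; ring).
      set (Y := (INR t + 2) ^ i') in *. assert (0 <= (Y - 1) * X) by (apply Rmult_le_pos; lra). nra.
Qed.

End MGF.

Lemma exp_pow_nat x k : exp (INR k * x) = exp x ^ k.
Proof.
  induction k. simpl. rewrite Rmult_0_l, exp_0. reflexivity.
  rewrite S_INR, Rmult_plus_distr_r, Rmult_1_l, exp_plus, IHk. simpl. ring.
Qed.

Lemma exp_le_mono x y : x <= y -> exp x <= exp y.
Proof. intros [H|H]. apply Rlt_le, exp_increasing; auto. subst; lra. Qed.

Lemma exp_sq x : exp x = exp (x/2) * exp (x/2).
Proof. rewrite <- exp_plus. f_equal. field. Qed.

Lemma ineq_I2 lam : 0 <= lam -> lam - lam ^ 2 <= 1 - exp (- lam).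
Proof.
  intros H. rewrite exp_Ropp.
  assert (E : 1 + lam + lam^2/4 <= exp lam).
  { rewrite exp_sq. pose proof (exp_ineq1_le (lam/2)). nra. }
  assert (0 < exp lam) by apply exp_pos.
  assert (/ exp lam <= / (1 + lam + lam^2/4)) by (apply Rinv_le_contravar; nra).
  assert (/ (1 + lam + lam^2/4) <= 1 - lam + lam^2).
  { apply (Rmult_le_reg_r (1 + lam + lam^2/4)); [nra|]. rewrite Rinv_l by nra. nra. }
  lra.
Qed.

Lemma ineq_I3 lam : 0 <= lam <= 1 -> exp lam <= 1 + lam + 2 * lam ^ 2.
Proof.
  intros H.
  assert (E : (1 - lam/2)^2 <= exp (- lam)).
  { rewrite exp_sq. pose proof (exp_ineq1_le (-lam/2)).
    assert (0 <= 1 - lam/2 <= exp (-lam/2)) by lra. unfold pow. rewrite Rmult_1_r.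
    apply Rmult_le_compat; lra. }
  rewrite <- (Rinv_inv (exp lam)), <- exp_Ropp.
  assert (0 < (1 - lam/2)^2) by nra.
  apply (Rmult_le_reg_r (exp (- lam))). apply exp_pos. rewrite Rinv_l by (apply Rgt_not_eq, exp_pos).
  assert (0 <= lam^2 * ((1 - lam) * (5/2 - lam))) by (apply Rmult_le_pos; [nra| apply Rmult_le_pos; lra]).
  assert (1 <= (1 + lam + 2 * lam^2) * (1 - lam/2)^2) by nra.
  assert (0 <= 1 + lam + 2 * lam^2) by nra. nra.
Qed.

Lemma maxp_ge_gen (p : nat -> R) L d i : In i L -> p i <= fold_right (fun i acc => Rmax (p i) acc) d L.
Proof.
  induction L; simpl; intros H. contradiction.
  destruct H as [->|H]. apply Rmax_l. specialize (IHL H). pose proof (Rmax_r (p a) (fold_right (fun i acc => Rmax (p i) acc) d L)). lra.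
Qed.

Lemma maxp_att_gen (p : nat -> R) L d : fold_right (fun i acc => Rmax (p i) acc) d L = d \/
  exists i, In i L /\ fold_right (fun i acc => Rmax (p i) acc) d L = p i.
Proof.
  induction L; simpl. auto.
  apply Rmax_case. right. exists a; auto.
  destruct IHL as [E|[i [Hi E]]]; auto. right; exists i; auto.
Qed.

Section Tails.
Variable l : nat.
Variable p : nat -> R.
Hypothesis hl : (1 <= l)%nat.
Hypothesis hp : forall i, (1 <= i <= l)%nat -> 0 <= p i < 1.
Variable n : nat.

Definition Aw := 1 - maxp l p.

Lemma maxp_ge i : (1 <= i <= l)%nat -> p i <= maxp l p.
Proof. intros H. apply maxp_ge_gen. apply in_seq. lia. Qed.

Lemma maxp_att : exists m, (1 <= m <= l)%nat /\ maxp l p = p m.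
Proof.
  unfold maxp. destruct (maxp_att_gen p (seq 1 l) (p 1%nat)) as [E|[i [Hi E]]].
  - exists 1%nat. split; [lia|auto].
  - exists i. apply in_seq in Hi. split; [lia|auto].
Qed.

Lemma Aw_range : 0 < Aw <= 1.
Proof.
  unfold Aw. destruct maxp_att as [m [Hm E]]. rewrite E. pose proof (hp m Hm).
  pose proof (maxp_ge 1 ltac:(lia)). rewrite E in H0. pose proof (hp 1%nat ltac:(lia)). lra.
Qed.

Lemma Q_bound lam k : 0 <= lam ->
  1 - G l p n k <= INR (k+2) ^ (l-1) * exp (lam * INR n + lam * INR (l-1) - Aw * (lam - lam^2) * INR k).
Proof.
  intros Hlam. pose proof Aw_range as HA.
  set (e := exp (- lam)). set (r := 1 - Aw * (1 - e)).
  assert (He : 0 < e <= 1).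
  { split. apply exp_pos. unfold e. rewrite <- exp_0. apply exp_le_mono. lra. }
  assert (Hre : e <= r) by (unfold r; nra).
  assert (Hr : 0 < r <= 1) by (unfold r; nra).
  assert (Hk : forall j, (1 <= j <= l)%nat -> (1 - p j) * exp (- lam) + p j <= r).
  { intros j Hj. fold e. unfold r, Aw. pose proof (maxp_ge j Hj). nra. }
  rewrite Q_eq.
  assert (S1 : PE l p k (fun z => indb (Nat.ltb (rank_ n z k (S l)) n)) <= PE l p k (fun z => exp (lam * INR n) * W lam z l k)).
  { apply PE_le; auto. intros z. unfold indb. destruct (Nat.ltb_spec (rank_ n z k (S l)) n).
    - pose proof (W_key n z lam Hlam l k H).
      assert (exp (lam * INR n) * exp (- lam * INR (rank_ n z k (S l))) >= 1).
      { rewrite <- exp_plus. rewrite <- exp_0. apply Rle_ge, exp_le_mono.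
        pose proof (le_INR _ _ (Nat.lt_le_incl _ _ H)). nra. }
      pose proof (exp_pos (lam * INR n)). nra.
    - pose proof (W_nonneg lam z l k). pose proof (exp_pos (lam * INR n)). nra. }
  rewrite PE_scal in S1.
  pose proof (W_bound l p hp lam r Hlam Hr Hk l (le_n l) k k (le_n k)) as S2.
  destruct l as [|l']; [lia|]. simpl bnd in S2. replace (S l' - 1)%nat with l' by lia.
  assert (S3 : r ^ k <= exp (- Aw * (lam - lam^2) * INR k)).
  { rewrite Rmult_comm, exp_pow_nat. apply pow_incr. split; [lra|].
    unfold r. pose proof (exp_ineq1_le (- Aw * (1 - e))). pose proof (ineq_I2 lam Hlam). fold e in H0.
    eapply Rle_trans; [|apply exp_le_mono; instantiate (1 := - Aw * (1 - e)); nra]. lra. }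
  assert (S4 : / r ^ l' <= exp (lam * INR l')).
  { rewrite Rmult_comm, exp_pow_nat. rewrite <- (Rinv_inv (exp lam ^ l')).
    apply Rinv_le_contravar. apply Rinv_0_lt_compat, pow_lt, exp_pos.
    rewrite <- pow_inv. rewrite <- exp_Ropp. apply pow_incr. fold e. lra. }
  assert (0 <= INR (k+2) ^ l') by (apply pow_le, pos_INR).
  assert (0 <= r ^ k) by (apply pow_le; lra).
  assert (0 < exp (lam * INR n)) by apply exp_pos.
  assert (0 <= / r ^ l') by (apply Rlt_le, Rinv_0_lt_compat, pow_lt; lra).
  replace (lam * INR n + lam * INR l' - Aw * (lam - lam ^ 2) * INR k) with
    (lam * INR n + (lam * INR l' + (- Aw * (lam - lam ^ 2) * INR k))) by ring.
  rewrite !exp_plus.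
  eapply Rle_trans; [exact S1|]. eapply Rle_trans. apply Rmult_le_compat_l; [lra|]. exact S2.
  unfold Rdiv.
  replace (exp (lam * INR n) * (INR (k + 2) ^ l' * r ^ k * / r ^ l')) with
    (INR (k + 2) ^ l' * (exp (lam * INR n) * ((/ r ^ l') * r ^ k))) by ring.
  apply Rmult_le_compat_l; auto. apply Rmult_le_compat_l; [lra|].
  apply Rmult_le_compat; auto.
Qed.

Lemma G_bound m lam k : (1 <= m <= l)%nat -> maxp l p = p m -> 0 <= lam <= 1 ->
  G l p n k <= exp (- lam * INR n + Aw * (lam + 2 * lam^2) * INR k).
Proof.
  intros Hm Em Hlam. pose proof Aw_range as HA.
  unfold G.
  assert (S1 : PE l p k (fun z => indb (Nat.eqb (rank_ n z k (S l)) n)) <=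
               PE l p k (fun z => exp (- lam * INR n) * exp (lam * INR (cnt z m 1 k)))).
  { apply PE_le; auto. intros z. unfold indb. destruct (Nat.eqb_spec (rank_ n z k (S l)) n).
    - pose proof (rank_le_chain n z k m l Hm). pose proof (rank_le_cnt n z k m ltac:(lia)).
      rewrite <- exp_plus, <- exp_0. apply exp_le_mono.
      assert (INR n <= INR (cnt z m 1 k)) by (apply le_INR; lia). nra.
    - pose proof (exp_pos (- lam * INR n)). pose proof (exp_pos (lam * INR (cnt z m 1 k))). nra. }
  rewrite PE_scal in S1.
  set (w := 1 + Aw * (exp lam - 1)).
  assert (Hw : (1 - p m) * exp lam + p m <= w) by (unfold w, Aw; rewrite Em; lra).
  assert (H1 : 1 <= exp lam) by (rewrite <- exp_0; apply exp_le_mono; lra).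
  pose proof (cnt_mgf l p hp lam w m 1 k k Hm (le_n 1) (le_n k) ltac:(unfold w; nra) Hw) as S2.
  replace (S k - 1)%nat with k in S2 by lia.
  assert (S3 : w ^ k <= exp (Aw * (lam + 2 * lam^2) * INR k)).
  { rewrite Rmult_comm, exp_pow_nat. apply pow_incr. split. unfold w; nra.
    pose proof (exp_ineq1_le (Aw * (exp lam - 1))). pose proof (ineq_I3 lam Hlam).
    eapply Rle_trans; [unfold w; apply H|]. apply exp_le_mono. nra. }
  rewrite exp_plus. pose proof (exp_pos (- lam * INR n)).
  eapply Rle_trans; [exact S1|]. apply Rmult_le_compat_l; lra.
Qed.

End Tails.

Fixpoint sumn (f : nat -> R) (M : nat) : R :=
  match M with O => 0 | S M' => sumn f M' + f M' end.

Lemma sumn_le f g M : (forall s, (s < M)%nat -> f s <= g s) -> sumn f M <= sumn g M.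
Proof. induction M; simpl; intros H. lra. pose proof (H M ltac:(lia)). specialize (IHM ltac:(intros; apply H; lia)). lra. Qed.

Lemma sumn_plus f g M : sumn (fun s => f s + g s) M = sumn f M + sumn g M.
Proof. induction M; simpl. lra. rewrite IHM. ring. Qed.

Lemma sumn_sub_const c f M : sumn (fun s => c - f s) M = INR M * c - sumn f M.
Proof. induction M; simpl sumn. simpl. ring. rewrite IHM, S_INR. ring. Qed.

Lemma sumn_const c M : sumn (fun _ => c) M = INR M * c.
Proof. induction M; simpl sumn. simpl; ring. rewrite IHM, S_INR. ring. Qed.

Lemma sumn_ind_lt k M : sumn (fun s => if lt_dec s k then 1 else 0) M <= INR k.
Proof.
  assert (forall M, sumn (fun s => if lt_dec s k then 1 else 0) M = INR (Nat.min M k)).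
  { induction M0; simpl sumn. simpl; auto.
    rewrite IHM0. destruct (lt_dec M0 k).
    - replace (Nat.min (S M0) k) with (S (Nat.min M0 k)) by lia. rewrite S_INR. ring.
    - replace (Nat.min (S M0) k) with (Nat.min M0 k) by lia. ring. }
  rewrite H. apply le_INR. lia.
Qed.

Lemma sumn_geo x K M : 0 <= x < 1 -> sumn (fun s => if le_dec K s then x ^ s else 0) M <= x ^ K / (1 - x).
Proof.
  intros Hx. assert (H : forall M, sumn (fun s => if le_dec K s then x ^ s else 0) M * (1 - x) = x ^ K - x ^ (Nat.max K M)).
  { induction M0; simpl sumn.
    - rewrite Nat.max_0_r. ring.
    - rewrite Rmult_plus_distr_r, IHM0. destruct (le_dec K M0).
      + rewrite !Nat.max_r by lia. simpl. ring.
      + rewrite !Nat.max_l by lia. ring. }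
  specialize (H M). pose proof (pow_le x (Nat.max K M) ltac:(lra)).
  apply (Rmult_le_reg_r (1 - x)); [lra|]. unfold Rdiv. rewrite Rmult_assoc, Rinv_l by lra. lra.
Qed.

Lemma sumn_ind_lt_c c k M : sumn (fun s => if lt_dec s k then c else 0) M = INR (Nat.min M k) * c.
Proof.
  induction M; simpl sumn. simpl; ring.
  rewrite IHM. destruct (lt_dec M k).
  - replace (Nat.min (S M) k) with (S (Nat.min M k)) by lia. rewrite S_INR. ring.
  - replace (Nat.min (S M) k) with (Nat.min M k) by lia. ring.
Qed.

Lemma sum_f_sumn f M : sum_f_R0 f M = sumn f (S M).
Proof. induction M; simpl. lra. rewrite IHM. simpl. reflexivity. Qed.

Lemma lim_le U L B : Un_cv U L -> (forall M, U M <= B) -> L <= B.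
Proof.
  intros H HB. destruct (Rle_lt_dec L B) as [|Hlt]; auto.
  destruct (H (L - B) ltac:(lra)) as [N HN]. specialize (HN N (le_n N)). specialize (HB N).
  unfold Rdist in HN. apply Rabs_def2 in HN. lra.
Qed.

Section Series.
Variable l : nat.
Variable p : nat -> R.
Hypothesis hp : forall i, (1 <= i <= l)%nat -> 0 <= p i < 1.
Variable n : nat.

Notation G := (G l p n).
Notation probT := (probT l p n).

Lemma S_abel M : sum_f_R0 (fun t => INR t * probT t) M = sumn (fun s => G M - G s) M.
Proof.
  induction M.
  - simpl. ring.
  - rewrite tech5. rewrite IHM. rewrite probT_S. simpl sumn.
    rewrite !sumn_sub_const. rewrite S_INR. ring.
Qed.

Lemma S_nonneg_step M : sum_f_R0 (fun t => INR t * probT t) M <= sum_f_R0 (fun t => INR t * probT t) (S M).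
Proof.
  rewrite tech5. pose proof (probT_nonneg l p hp n (S M)). pose proof (pos_INR (S M)).
  assert (0 <= INR (S M) * probT (S M)) by (apply Rmult_le_pos; auto). lra.
Qed.

Lemma ET_exists B : (forall M, sumn (fun s => 1 - G s) M <= B) ->
  exists ET, infinite_sum (fun t => INR t * probT t) ET /\ ET <= B /\
    forall M, sum_f_R0 (fun t => INR t * probT t) M <= ET.
Proof.
  intros HB.
  assert (Hb : forall M, sum_f_R0 (fun t => INR t * probT t) M <= B).
  { intros M. rewrite S_abel. eapply Rle_trans; [|apply (HB M)]. apply sumn_le. intros s _.
    pose proof (G_range l p hp n M). lra. }
  assert (Hg : Un_growing (sum_f_R0 (fun t => INR t * probT t))) by (intro; apply S_nonneg_step).
  destruct (growing_cv _ Hg) as [ET HET].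
  { exists B. intros x [i ->]. apply Hb. }
  exists ET. split; [exact HET|]. split.
  - apply (lim_le _ _ _ HET Hb).
  - intros M. apply (growing_ineq _ _ Hg HET).
Qed.

Lemma ET_lower k1 k eta : (k1 <= k)%nat -> (forall s, (s < k1)%nat -> G s <= eta) ->
  INR k1 * (G k - eta) <= sum_f_R0 (fun t => INR t * probT t) k.
Proof.
  intros Hk H. rewrite S_abel.
  replace (INR k1 * (G k - eta)) with (sumn (fun s => if lt_dec s k1 then G k - eta else 0) k).
  2:{ rewrite sumn_ind_lt_c. f_equal. f_equal. lia. }
  apply sumn_le. intros s Hs. destruct (lt_dec s k1).
  - specialize (H s l0). lra.
  - pose proof (G_mono' l p hp n s k ltac:(lia)). lra.
Qed.

Lemma Pdev_part (x : R) (k : nat) (eta ET eps : R) : 0 <= eta ->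
  (forall j, INR j < x -> G j <= eta) -> 1 - G k <= eta ->
  (forall t : nat, eps < Rabs (INR t - ET) -> INR t < x \/ (k < t)%nat) ->
  forall M, sum_f_R0 (fun t => if Rlt_dec eps (Rabs (INR t - ET)) then probT t else 0) M <= 2 * eta.
Proof.
  intros He Hlow Hup Hsplit M.
  set (f1 := fun t => if Rlt_dec (INR t) x then probT t else 0).
  set (f2 := fun t : nat => if lt_dec k t then probT t else 0).
  assert (S1 : forall M, sum_f_R0 f1 M <= eta).
  { induction M0.
    - simpl. unfold f1. destruct (Rlt_dec (INR 0) x). rewrite probT_0. apply Hlow; auto. lra.
    - destruct (Rlt_dec (INR (S M0)) x).
      + rewrite (sum_eq f1 probT). rewrite sum_probT. apply Hlow; auto.
        intros i Hi. unfold f1. destruct (Rlt_dec (INR i) x); auto.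
        exfalso. apply n0. apply Rle_lt_trans with (INR (S M0)); auto. apply le_INR; auto.
      + simpl. unfold f1 at 2. destruct (Rlt_dec (INR (S M0)) x); [contradiction|]. lra. }
  assert (S2 : forall M, sum_f_R0 f2 M = if le_dec M k then 0 else G M - G k).
  { induction M0.
    - simpl. unfold f2. destruct (lt_dec k 0); [lia|]. destruct (le_dec 0 k); [lra|lia].
    - simpl. rewrite IHM0. unfold f2. destruct (lt_dec k (S M0)).
      + rewrite probT_S. destruct (le_dec M0 k); destruct (le_dec (S M0) k); try lia.
        replace M0 with k by lia. ring. ring.
      + destruct (le_dec M0 k); destruct (le_dec (S M0) k); try lia. ring. }
  assert (S2' : sum_f_R0 f2 M <= eta).
  { rewrite S2. destruct (le_dec M k). lra. pose proof (G_range l p hp n M). lra. }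
  eapply Rle_trans. apply (sum_Rle _ (fun t => f1 t + f2 t)).
  - intros t _. unfold f1, f2. pose proof (probT_nonneg l p hp n t).
    destruct (Rlt_dec eps (Rabs (INR t - ET))).
    + destruct (Hsplit t r) as [Ha|Hb].
      * destruct (Rlt_dec (INR t) x); [|contradiction]. destruct (lt_dec k t); lra.
      * destruct (lt_dec k t); [|contradiction]. destruct (Rlt_dec (INR t) x); lra.
    + destruct (Rlt_dec (INR t) x); destruct (lt_dec k t); lra.
  - rewrite plus_sum. specialize (S1 M). lra.
Qed.

Lemma Pdev_exists eps ET B : (forall M, sum_f_R0 (fun t => if Rlt_dec eps (Rabs (INR t - ET)) then probT t else 0) M <= B) ->
  exists Pdev, infinite_sum (fun t => if Rlt_dec eps (Rabs (INR t - ET)) then probT t else 0) Pdev /\ Pdev <= B.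
Proof.
  intros HB. set (U := sum_f_R0 (fun t => if Rlt_dec eps (Rabs (INR t - ET)) then probT t else 0)).
  assert (Hg : Un_growing U).
  { intro M. unfold U. rewrite tech5. destruct (Rlt_dec eps (Rabs (INR (S M) - ET))); [|lra].
    pose proof (probT_nonneg l p hp n (S M)). lra. }
  destruct (growing_cv _ Hg) as [Pd HP].
  { exists B. intros x [i ->]. apply HB. }
  exists Pd. split; [exact HP|]. apply (lim_le _ _ _ HP HB).
Qed.

End Series.

Lemma ineq_I4 x alpha d : 0 <= x -> 0 < alpha -> x ^ d <= (INR d / alpha) ^ d * exp (alpha * x).
Proof.
  intros Hx Ha. destruct d as [|d'].
  - simpl. rewrite Rmult_1_l. rewrite <- exp_0. apply exp_le_mono. nra.
  - set (d := S d'). assert (Hd : 0 < INR d) by (apply lt_0_INR; unfold d; lia).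
    assert (E : x = INR d / alpha * (alpha * x / INR d)) by (field; split; lra).
    rewrite E at 1. rewrite Rpow_mult_distr. apply Rmult_le_compat_l.
    + apply pow_le. apply Rlt_le, Rdiv_lt_0_compat; lra.
    + replace (alpha * x) with (INR d * (alpha * x / INR d)) at 2 by (field; lra).
      rewrite exp_pow_nat. apply pow_incr. split.
      * apply Rmult_le_pos. nra. apply Rlt_le, Rinv_0_lt_compat; lra.
      * pose proof (exp_ineq1_le (alpha * x / INR d)). lra.
Qed.

Lemma nat_ceil x : 0 <= x -> exists k : nat, x <= INR k <= x + 1.
Proof.
  intros Hx. destruct (archimed x) as [H1 H2].
  assert (Hz : (0 <= up x)%Z). { apply le_IZR. lra. }
  exists (Z.to_nat (up x)). rewrite INR_IZR_INZ, Z2Nat.id by auto. lra.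
Qed.

Lemma nat_floor x : 0 <= x -> exists k : nat, x - 1 <= INR k <= x.
Proof.
  intros Hx. destruct (archimed x) as [H1 H2].
  assert (Hz : (0 < up x)%Z). { apply lt_IZR. lra. }
  exists (Z.to_nat (up x - 1)). rewrite INR_IZR_INZ, Z2Nat.id by lia. rewrite minus_IZR. simpl. lra.
Qed.

Lemma exp_neg_le y : 0 < y -> exp (- y) <= 1 / y.
Proof.
  intros Hy. rewrite exp_Ropp. pose proof (exp_ineq1_le y). pose proof (exp_pos y).
  unfold Rdiv. rewrite Rmult_1_l. apply Rinv_le_contravar; lra.
Qed.

Lemma sumn_scal c f M : sumn (fun s => c * f s) M = c * sumn f M.
Proof. induction M; simpl. ring. rewrite IHM. ring. Qed.

Section Tail.
Variable l : nat.
Variable p : nat -> R.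
Hypothesis hl : (1 <= l)%nat.
Hypothesis hp : forall i, (1 <= i <= l)%nat -> 0 <= p i < 1.
Variable n : nat.

Lemma far_bound s : 4 * (INR n + INR (l-1)) <= Aw l p * INR s ->
  1 - G l p n s <= (INR (l-1) * 16 / Aw l p) ^ (l-1) * exp (Aw l p / 8) * exp (- Aw l p / 16) ^ s.
Proof.
  intros H. pose proof (Aw_range l p hl hp) as HA. set (A := Aw l p) in *.
  pose proof (Q_bound l p hl hp n (1/2) s ltac:(lra)) as Q. fold A in Q.
  eapply Rle_trans; [exact Q|].
  assert (E1 : exp (1/2 * INR n + 1/2 * INR (l - 1) - A * (1/2 - (1/2)^2) * INR s) <= exp (- A * INR s / 8)).
  { apply exp_le_mono. nra. }
  assert (E2 : INR (s+2) ^ (l-1) <= (INR (l-1) / (A/16)) ^ (l-1) * exp (A/16 * INR (s+2))).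
  { apply ineq_I4. apply pos_INR. lra. }
  replace (INR (l-1) / (A/16)) with (INR (l-1) * 16 / A) in E2 by (field; lra).
  rewrite <- exp_pow_nat.
  assert (E3 : exp (A / 16 * INR (s + 2)) * exp (- A * INR s / 8) = exp (A/8) * exp (INR s * (- A / 16))).
  { rewrite <- !exp_plus. f_equal. rewrite plus_INR. simpl. field. }
  pose proof (exp_pos (- A * INR s / 8)).
  assert (0 <= INR (s+2) ^ (l-1)) by (apply pow_le, pos_INR).
  eapply Rle_trans. apply Rmult_le_compat; [auto|apply Rlt_le, exp_pos|exact E2|exact E1].
  rewrite Rmult_assoc, E3. lra.
Qed.

Lemma tail_sum k K eta : 0 <= eta -> (forall s, (k <= s)%nat -> 1 - G l p n s <= eta) ->
  4 * (INR n + INR (l-1)) <= Aw l p * INR K ->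
  forall M, sumn (fun s => 1 - G l p n s) M <=
    INR k + eta * INR K + (INR (l-1) * 16 / Aw l p) ^ (l-1) * exp (Aw l p / 8) *
       (exp (- Aw l p / 16) ^ K / (1 - exp (- Aw l p / 16))).
Proof.
  intros He Hk HK M. pose proof (Aw_range l p hl hp) as HA.
  set (C := (INR (l-1) * 16 / Aw l p) ^ (l-1) * exp (Aw l p / 8)).
  set (x := exp (- Aw l p / 16)).
  assert (Hx : 0 <= x < 1).
  { split. apply Rlt_le, exp_pos. unfold x. rewrite <- exp_0. apply exp_increasing. lra. }
  assert (HC : 0 <= C).
  { unfold C. apply Rmult_le_pos. apply pow_le. apply Rmult_le_pos. apply Rmult_le_pos. apply pos_INR. lra.
    apply Rlt_le, Rinv_0_lt_compat; lra. apply Rlt_le, exp_pos. }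
  eapply Rle_trans. apply (sumn_le _ (fun s => (if lt_dec s k then 1 else 0) + eta * (if lt_dec s K then 1 else 0)
     + C * (if le_dec K s then x ^ s else 0))).
  - intros s _. pose proof (G_range l p hp n s).
    pose proof (pow_le x s (proj1 Hx)).
    destruct (lt_dec s k); destruct (lt_dec s K); destruct (le_dec K s); try lia.
    + nra. + nra.
    + specialize (Hk s ltac:(lia)). nra.
    + assert (4 * (INR n + INR (l-1)) <= Aw l p * INR s).
      { eapply Rle_trans; [exact HK|]. apply Rmult_le_compat_l. lra. apply le_INR; lia. }
      pose proof (far_bound s H1). fold C x in H2. nra.
  - rewrite !sumn_plus, sumn_scal, sumn_scal.
    pose proof (sumn_ind_lt k M). rewrite (sumn_ind_lt_c 1 K M).
    pose proof (sumn_geo x K M Hx).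
    assert (INR (Nat.min M K) * 1 <= INR K) by (rewrite Rmult_1_r; apply le_INR; lia).
    assert (0 <= INR (Nat.min M K)) by apply pos_INR.
    apply Rplus_le_compat. apply Rplus_le_compat; [lra|]. apply Rmult_le_compat_l; lra.
    apply Rmult_le_compat_l; lra.
Qed.

End Tail.

Theorem theorem3 (l : nat) (p : nat -> R) (delta : R)
  (hl : (1 <= l)%nat)
  (hp : forall i, (1 <= i <= l)%nat -> 0 <= p i < 1)
  (hworst : exists m, (1 <= m <= l)%nat /\
              forall i, (1 <= i <= l)%nat -> i <> m -> p i < p m)
  (hdelta : 0 < delta < 1/2) :
  let A := 1 - maxp l p in
  exists N : nat, forall n : nat, (N <= n)%nat ->
    exists ET : R,
      infinite_sum (fun t => INR t * probT l p n t) ET /\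
      exists Pdev : R,
        infinite_sum (fun t =>
          if Rlt_dec (Rpower (INR n) (1/2 + delta) / A) (Rabs (INR t - ET))
          then probT l p n t else 0) Pdev /\
        Pdev <= 2 * A / INR n
                + 2 * A * Rpower (INR n) (2 * delta)
                  / (INR n ^ 2 - Rpower (INR n) (1 + 2 * delta)).
Proof.
  intros A.
  assert (HAw : Aw l p = A) by reflexivity.
  pose proof (Aw_range l p hl hp) as HA. rewrite HAw in HA.
  destruct (maxp_att l p hl) as [m [Hm Em]].
  set (d0 := (l - 1)%nat).
  assert (Hd0 : 0 <= INR d0) by apply pos_INR.
  destruct (nat_ceil ((INR d0 + 2) / (2 * delta))) as [K0 HK0].
  { apply Rlt_le, Rdiv_lt_0_compat; lra. }
  assert (HK0' : INR d0 + 2 <= 2 * delta * INR K0).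
  { apply (Rmult_le_reg_r (/ (2 * delta))). apply Rinv_0_lt_compat; lra.
    replace (2 * delta * INR K0 * / (2 * delta)) with (INR K0) by (field; lra). lra. }
  set (x := exp (- A / 16)).
  assert (Hx : 0 < x < 1).
  { split. apply exp_pos. unfold x. rewrite <- exp_0. apply exp_increasing. lra. }
  set (Cp := (INR d0 * 16 / A) ^ d0 * exp (A / 8)).
  assert (HCp : 0 <= Cp).
  { unfold Cp. apply Rmult_le_pos. apply pow_le. apply Rmult_le_pos. lra.
    apply Rlt_le, Rinv_0_lt_compat; lra. apply Rlt_le, exp_pos. }
  set (cK := (INR K0 * 512) ^ K0).
  assert (HcK : 0 < cK).
  { unfold cK. apply pow_lt. assert (0 < INR K0) by nra. lra. }
  set (c_eta := (3 / A) ^ d0 * cK * 16 / A).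
  assert (Hceta : 0 <= c_eta).
  { unfold c_eta. apply Rmult_le_pos; [|apply Rlt_le, Rinv_0_lt_compat; lra].
    apply Rmult_le_pos; [|lra]. apply Rmult_le_pos; [|lra]. apply pow_le. apply Rlt_le, Rdiv_lt_0_compat; lra. }
  set (c_far := 8 * Cp / (1 - x)).
  assert (Hcfar : 0 <= c_far).
  { unfold c_far. apply Rmult_le_pos; [lra|]. apply Rlt_le, Rinv_0_lt_compat; lra. }
  destruct (nat_ceil (64 + 64 * INR d0 ^ 2 + 2 * INR d0 + 3 + c_eta + c_far)) as [N HN].
  { pose proof (pow2_ge_0 (INR d0)). lra. }
  exists N. intros n Hn.
  assert (HnN := le_INR _ _ Hn).
  set (nR := INR n) in *.
  assert (HnR : 64 + 64 * INR d0 ^ 2 + 2 * INR d0 + 3 + c_eta + c_far <= nR) by lra.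
  assert (Hn1 : 64 <= nR) by (pose proof (pow2_ge_0 (INR d0)); lra).
  set (P := Rpower nR (1/2 + delta)).
  set (e2 := Rpower nR (2 * delta)).
  assert (F1 : P * P = nR * e2).
  { unfold P, e2. rewrite <- Rpower_plus. replace (1/2 + delta + (1/2 + delta)) with (1 + 2 * delta) by field.
    rewrite Rpower_plus, Rpower_1 by lra. reflexivity. }
  assert (F2 : P <= nR).
  { unfold P. rewrite <- (Rpower_1 nR) at 2 by lra. apply Rle_Rpower; lra. }
  assert (F3 : 1 <= e2).
  { unfold e2. rewrite <- (Rpower_O nR) by lra. apply Rle_Rpower; lra. }
  assert (F4 : 0 < P) by (unfold P, Rpower; apply exp_pos).
  assert (F5 : 8 <= P /\ 8 * INR d0 <= P).
  { assert (P * P >= 64 + 64 * INR d0 ^ 2) by nra. split; nra. }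
  set (a := P / 4). set (h := a / A).
  assert (Hh : 2 <= h).
  { unfold h, a. apply (Rmult_le_reg_r A); [lra|]. unfold Rdiv. rewrite Rmult_assoc, Rinv_l by lra. nra. }
  assert (Hh2 : h <= nR / (4 * A)).
  { unfold h, a. replace (P/4/A) with (P * /(4*A)) by (field; lra). unfold Rdiv.
    apply Rmult_le_compat_r; [apply Rlt_le, Rinv_0_lt_compat; lra | lra]. }
  set (eta := (3 * nR / A) ^ d0 * exp (- e2 / 512)).
  assert (Heta0 : 0 <= eta).
  { unfold eta. apply Rmult_le_pos. apply pow_le. apply Rlt_le, Rdiv_lt_0_compat; lra. apply Rlt_le, exp_pos. }
  assert (H3nA : 1 <= 3 * nR / A).
  { apply (Rmult_le_reg_r A); [lra|]. unfold Rdiv. rewrite Rmult_assoc, Rinv_l by lra. lra. }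
  assert (Heta1 : exp (- e2 / 512) <= eta).
  { unfold eta. pose proof (pow_R1_Rle _ d0 H3nA). pose proof (exp_pos (- e2 / 512)). nra. }
  assert (HnRpos : 0 < nR) by lra.
  assert (E5 : nR ^ (d0 + 2) <= e2 ^ K0).
  { rewrite <- (Rpower_pow K0 e2) by lra. unfold e2. rewrite Rpower_mult.
    rewrite <- (Rpower_pow (d0+2) nR) by lra. apply Rle_Rpower; [lra|]. rewrite plus_INR. simpl (INR 2). lra. }
  assert (E6 : e2 ^ K0 <= cK * exp (e2 / 512)).
  { pose proof (ineq_I4 e2 (1/512) K0 ltac:(lra) ltac:(lra)) as H.
    replace (INR K0 / (1/512)) with (INR K0 * 512) in H by field.
    replace (1/512 * e2) with (e2/512) in H by field. exact H. }
  assert (E7 : exp (- e2 / 512) <= cK / nR ^ (d0 + 2)).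
  { replace (- e2 / 512) with (- (e2/512)) by field. rewrite exp_Ropp.
    pose proof (exp_pos (e2/512)). assert (0 < nR ^ (d0 + 2)) by (apply pow_lt; lra).
    apply (Rmult_le_reg_r (exp (e2/512))); [lra|]. rewrite Rinv_l by lra.
    apply (Rmult_le_reg_r (nR ^ (d0+2))); [lra|].
    replace (cK / nR ^ (d0 + 2) * exp (e2 / 512) * nR ^ (d0 + 2)) with (cK * exp (e2 / 512)) by (field; lra). lra. }
  assert (Heta : eta <= A / (16 * nR)).
  { unfold eta. replace (3 * nR / A) with (3 / A * nR) by (field; lra). rewrite Rpow_mult_distr.
    set (Q := (3/A) ^ d0).
    assert (HQ : 0 < Q) by (apply pow_lt, Rdiv_lt_0_compat; lra).
    assert (0 < nR ^ d0) by (apply pow_lt; lra).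
    eapply Rle_trans. apply Rmult_le_compat_l; [nra|exact E7].
    replace (Q * nR ^ d0 * (cK / nR ^ (d0 + 2))) with (Q * cK / nR ^ 2) by (rewrite pow_add; field; lra).
    assert (Q * cK <= nR * A / 16).
    { assert (c_eta <= nR) by (pose proof (pow2_ge_0 (INR d0)); lra). unfold c_eta in H0. fold Q in H0.
      apply (Rmult_le_reg_r (16 / A)). apply Rdiv_lt_0_compat; lra.
      replace (nR * A / 16 * (16 / A)) with nR by (field; lra). replace (Q * cK * (16 / A)) with (Q * cK * 16 / A) by (field; lra). lra. }
    unfold Rdiv at 1. eapply Rle_trans. apply Rmult_le_compat_r; [|exact H0]. apply Rlt_le, Rinv_0_lt_compat, pow_lt; lra.
    right. field. lra. }
  assert (Ha2 : a * a = nR * e2 / 16) by (unfold a; nra).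
  assert (Hale : a <= nR / 4) by (unfold a; lra).
  assert (Had0 : 2 * INR d0 <= a) by (unfold a; lra).
  assert (Hlow : forall j, INR j < nR / A - h -> G l p n j <= eta).
  { intros j Hj. set (lam := a / (4 * nR)).
    assert (Hlam : 0 <= lam <= 1).
    { unfold lam. split. apply Rlt_le, Rdiv_lt_0_compat; unfold a; lra.
      apply (Rmult_le_reg_r (4 * nR)); [lra|]. unfold Rdiv. rewrite Rmult_assoc, Rinv_l by lra. unfold a in *; lra. }
    pose proof (G_bound l p hl hp n m lam j Hm Em Hlam) as GB. rewrite HAw in GB. fold nR in GB.
    eapply Rle_trans; [exact GB|]. eapply Rle_trans; [|exact Heta1]. apply exp_le_mono.
    set (u := A * INR j).
    assert (Hu : u <= nR - a).
    { unfold u. apply (Rmult_lt_compat_l A) in Hj; [|lra].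
      replace (A * (nR / A - h)) with (nR - a) in Hj by (unfold h; field; lra). lra. }
    replace (A * (lam + 2 * lam ^ 2) * INR j) with ((lam + 2 * lam^2) * u) by (unfold u; ring).
    assert (Hc : (lam + 2 * lam^2) * u <= (lam + 2 * lam^2) * (nR - a)) by (apply Rmult_le_compat_l; nra).
    assert (Eq : - lam * nR + (lam + 2 * lam^2) * (nR - a) = - (a * a) / (8 * nR) - 2 * lam^2 * a)
      by (unfold lam; field; lra).
    assert (0 <= 2 * lam ^ 2 * a) by (unfold a in *; nra).
    assert (- (a * a) / (8 * nR) = - e2 / 128) by (rewrite Ha2; field; lra).
    lra. }
  destruct (nat_ceil (nR / A + h)) as [k Hk].
  { assert (0 <= nR / A) by (apply Rlt_le, Rdiv_lt_0_compat; lra). lra. }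
  assert (Hup : 1 - G l p n k <= eta).
  { set (lam := a / (8 * nR)).
    assert (Hlam : 0 <= lam <= 1).
    { unfold lam. split. apply Rlt_le, Rdiv_lt_0_compat; unfold a; lra.
      apply (Rmult_le_reg_r (8 * nR)); [lra|]. unfold Rdiv. rewrite Rmult_assoc, Rinv_l by lra. unfold a in *; lra. }
    pose proof (Q_bound l p hl hp n lam k ltac:(lra)) as QB. rewrite HAw in QB. fold d0 nR in QB.
    eapply Rle_trans; [exact QB|]. unfold eta. apply Rmult_le_compat.
    - apply pow_le, pos_INR.
    - apply Rlt_le, exp_pos.
    - apply pow_incr. split. apply pos_INR. rewrite plus_INR. simpl (INR 2).
      assert (nR / A + h + 3 <= 3 * nR / A).
      { assert (h <= nR / A). { eapply Rle_trans; [exact Hh2|]. apply Rmult_le_compat_l. lra.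
          apply Rinv_le_contravar; lra. }
        assert (3 <= nR / A). { apply (Rmult_le_reg_r A); [lra|]. unfold Rdiv. rewrite Rmult_assoc, Rinv_l by lra. nra. }
        replace (3 * nR / A) with (nR / A + nR / A + nR / A) by (field; lra). lra. }
      lra.
    - apply exp_le_mono. set (u := A * INR k).
      assert (Hu : nR + a <= u).
      { unfold u. destruct Hk as [Hk' _]. apply (Rmult_le_compat_l A) in Hk'; [|lra].
        replace (A * (nR / A + h)) with (nR + a) in Hk' by (unfold h; field; lra). lra. }
      replace (A * (lam - lam ^ 2) * INR k) with ((lam - lam^2) * u) by (unfold u; ring).
      assert (Hc : (lam - lam^2) * (nR + a) <= (lam - lam^2) * u) by (apply Rmult_le_compat_l; nra).
      assert (H1 : lam * INR d0 <= lam * (a / 2)) by (apply Rmult_le_compat_l; lra).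
      assert (H2 : lam^2 * a <= lam^2 * nR) by (apply Rmult_le_compat_l; nra).
      assert (Eq : lam * (a/2) - lam * a + 2 * lam^2 * nR = - (a * a) / (32 * nR)) by (unfold lam; field; lra).
      assert (- (a * a) / (32 * nR) = - e2 / 512) by (rewrite Ha2; field; lra).
      nra. }
  assert (Hupall : forall s, (k <= s)%nat -> 1 - G l p n s <= eta).
  { intros s Hs. pose proof (G_mono' l p hp n k s Hs). lra. }
  destruct (nat_ceil (4 * (nR + INR d0) / A)) as [K HK].
  { apply Rlt_le, Rdiv_lt_0_compat; lra. }
  assert (HKA : 4 * (nR + INR d0) <= A * INR K).
  { destruct HK as [HK' _]. apply (Rmult_le_compat_l A) in HK'; [|lra].
    replace (A * (4 * (nR + INR d0) / A)) with (4 * (nR + INR d0)) in HK' by (field; lra). lra. }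
  assert (HB : forall M, sumn (fun s => 1 - G l p n s) M <= nR / A + 2 * h).
  { intros M. pose proof (tail_sum l p hl hp n k K eta Heta0 Hupall) as TS.
    rewrite HAw in TS. fold d0 nR x in TS. specialize (TS HKA M).
    fold Cp in TS.
    assert (T1 : eta * INR K <= 1/2).
    { assert (INR K <= 4 * (nR + INR d0) / A + 1) by lra.
      eapply Rle_trans. apply Rmult_le_compat; [lra|apply pos_INR|exact Heta|exact H].
      replace (A / (16 * nR) * (4 * (nR + INR d0) / A + 1)) with ((4 * (nR + INR d0) + A) / (16 * nR)) by (field; lra).
      apply (Rmult_le_reg_r (16 * nR)); [lra|]. unfold Rdiv. rewrite Rmult_assoc, Rinv_l by lra.
      pose proof (pow2_ge_0 (INR d0)). lra. }
    assert (T2 : Cp * (x ^ K / (1 - x)) <= 1/2).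
    { assert (XK : x ^ K <= 4 / nR).
      { unfold x. rewrite <- exp_pow_nat. eapply Rle_trans. apply exp_le_mono.
        instantiate (1 := - (nR / 4)). nra.
        replace (4 / nR) with (1 / (nR / 4)) by (field; lra). apply exp_neg_le. lra. }
      assert (c_far <= nR) by (pose proof (pow2_ge_0 (INR d0)); lra).
      unfold c_far in H.
      assert (0 < 1 - x) by lra.
      apply (Rmult_le_reg_r ((1 - x) * nR)). nra.
      replace (Cp * (x ^ K / (1 - x)) * ((1 - x) * nR)) with (Cp * x ^ K * nR) by (field; lra).
      assert (Cp * x ^ K * nR <= Cp * 4) .
      { assert (x ^ K * nR <= 4). { apply (Rmult_le_compat_r nR) in XK; [|lra].
          replace (4 / nR * nR) with 4 in XK by (field; lra). lra. }
        replace (Cp * x ^ K * nR) with (Cp * (x ^ K * nR)) by ring. apply Rmult_le_compat_l; lra. }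
      assert (8 * Cp <= nR * (1 - x)).
      { apply (Rmult_le_compat_r (1 - x)) in H; [|lra].
        replace (8 * Cp / (1 - x) * (1 - x)) with (8 * Cp) in H by (field; lra). lra. }
      lra. }
    lra. }
  destruct (ET_exists l p hp n _ HB) as [ET [HET [HETub HETlb]]].
  destruct (nat_floor (nR / A - h)) as [k1 Hk1].
  { assert (nR / A - nR / (4 * A) = 3 * nR / (4 * A)) by (field; lra).
    assert (0 < 3 * nR / (4 * A)) by (apply Rdiv_lt_0_compat; lra). lra. }
  assert (Hk1k : (k1 <= k)%nat).
  { assert (INR k1 < INR k) by lra. apply INR_lt in H. lia. }
  assert (HETlow : nR / A - 2 * h <= ET).
  { assert (Hs : forall s, (s < k1)%nat -> G l p n s <= eta).
    { intros s Hs. apply Hlow. apply lt_INR in Hs. lra. }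
    pose proof (ET_lower l p hp n k1 k eta Hk1k Hs) as EL. specialize (HETlb k).
    assert (G l p n k >= 1 - eta) by lra.
    assert (0 <= INR k1) by apply pos_INR.
    assert (INR k1 * (1 - 2 * eta) <= INR k1 * (G l p n k - eta)) by (apply Rmult_le_compat_l; lra).
    assert (eta * INR k1 <= A / (16 * nR) * (nR / A)).
    { apply Rmult_le_compat; try lra. }
    replace (A / (16 * nR) * (nR / A)) with (1/16) in H2 by (field; lra).
    nra. }
  exists ET. split; [exact HET|].
  assert (HPA : P / A = 4 * h) by (unfold h, a; field; lra).
  assert (Hsplit : forall t : nat, P / A < Rabs (INR t - ET) -> INR t < nR / A - h \/ (k < t)%nat).
  { intros t Ht. rewrite HPA in Ht. unfold Rabs in Ht. destruct (Rcase_abs (INR t - ET)).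
    - left. lra.
    - right. assert (INR k < INR t) by lra. apply INR_lt in H. lia. }
  pose proof (Pdev_part l p hp n (nR / A - h) k eta ET (P / A) Heta0 Hlow Hup Hsplit) as PP.
  destruct (Pdev_exists l p hp n (P / A) ET (2 * eta) PP) as [Pd [HPd HPdle]].
  exists Pd. split; [exact HPd|].
  assert (T3 : 0 <= 2 * A * Rpower nR (2 * delta) / (nR ^ 2 - Rpower nR (1 + 2 * delta))).
  { assert (Rpower nR (1 + 2 * delta) < nR ^ 2).
    { rewrite <- (Rpower_pow 2 nR) by lra. apply Rpower_lt. lra. simpl. lra. }
    unfold Rdiv. apply Rmult_le_pos. fold e2. nra. apply Rlt_le, Rinv_0_lt_compat. lra. }
  assert (2 * eta <= 2 * A / nR).
  { eapply Rle_trans. apply Rmult_le_compat_l; [lra|exact Heta].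
    replace (2 * (A / (16 * nR))) with (A / (8 * nR)) by (field; lra).
    apply (Rmult_le_reg_r (8 * nR)); [lra|]. replace (A / (8 * nR) * (8 * nR)) with A by (field; lra).
    replace (2 * A / nR * (8 * nR)) with (16 * A) by (field; lra). lra. }
  fold e2 in T3. lra.
Qed.
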